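(* In the fixed-flow two-parallel-path setting with $l_{P_1}<l_{P_2}$, and with initial flows at vertices other than $s,d$ satisfying $f_v(0)\le\bar f$, $b_v(0)\le\bar b$, let $T_1=\max_{(u,v)\in E}\log(p_{uv}(0)/(\bar f+\bar b))/\log(1/\delta)$. Then for every integer $t\ge L+\max(0,T_1)$, $$r_{ss_1}(t+1)\ \ge\ r_{\min}(t)\left(1+\frac{\alpha-\beta}{C+\beta}\right),\qquad \alpha=1-l_{P_1},\ \beta=1-l_{P_2},\ C=\frac{5(\bar f+\bar b)}{\bar b(1-\delta)}.$$
   Context: Model (linear decision rule). Directed graph $G=(V,E)$, source $s$, destination $d$, discrete time; pheromone $p_{uv}(t)$, forward flows $f_v(t)$, backward flows $b_v(t)$; leakages $l_v\in[0,1]$; decay $\delta\in(0,1)$; exogenous inputs $f_s(t),b_d(t)$. Edge flows: $f_{uv}(t)=f_u(t)p_{uv}(t)/\sum_{z:(u,z)\in E}p_{uz}(t)$, $b_{uv}(t)=b_v(t)p_{uv}(t)/\sum_{z:(z,v)\in E}p_{zv}(t)$ (at a vertex with a single outgoing, resp. incoming, edge the whole flow goes along it). Updates: $f_v(t+1)=(1-l_v)\sum_{z:(z,v)\in E}f_{zv}(t)$ for $v\neq s$, $b_u(t+1)=(1-l_u)\sum_{z:(u,z)\in E}b_{uz}(t)$ for $u\ne d$, $p_{uv}(t+1)=\delta(p_{uv}(t)+f_{uv}(t)+b_{uv}(t))$. Path leakage $l_P=1-\prod_{v\in P\setminus\{s,d\}}(1-l_v)$. Two parallel paths: $G$ is the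 union of directed paths $P_1,P_2$ from $s$ to $d$ sharing only $s,d$; $s_1,s_2$ are the successors of $s$ and $d_1,d_2$ the predecessors of $d$ on $P_1,P_2$; $m=\mathrm{len}(P_1)$, $n=\mathrm{len}(P_2)$ (numbers of edges), $L=\max(m,n)$. Potential: $r_{ss_1}(t)=p_{ss_1}(t)/p_{ss_2}(t)$, $r_{d_1d}(t)=p_{d_1d}(t)/p_{d_2d}(t)$, and for $t\ge L$, $r_{\min}(t)=\min\{r_{ss_1}(t-i),\,r_{d_1d}(t-i):0\le i\le L-1\}$. Fixed-flow setting: $f_s(t)=\bar f>0$ and $b_d(t)=\bar b>0$ for all $t$, and all initial pheromone levels $p_{uv}(0)$ are positive. *)

(* Defs.v *)
From HB Require Import structures.
From mathcomp Require Import all_boot all_order all_algebra.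
From mathcomp Require Import boolp reals exp.
Set Implicit Arguments. Unset Strict Implicit. Unset Printing Implicit Defensive.
Import Order.TTheory GRing.Theory Num.Theory.
Local Open Scope ring_scope.

Section Model.
Variables (R : realType) (V : finType) (E : rel V).

(** Edge flows of the linear decision rule (only meaningful on edges). *)
Definition fedge (f : nat -> V -> R) (p : nat -> V -> V -> R) (t : nat)
  (u v : V) : R :=
  if #|[pred z | E u z]| == 1%N then f t u
  else f t u * p t u v / (\sum_(z | E u z) p t u z).

Definition bedge (b : nat -> V -> R) (p : nat -> V -> V -> R) (t : nat)
  (u v : V) : R :=
  if #|[pred z | E z v]| == 1%N then b t v
  else b t v * p t u v / (\sum_(z | E z v) p t z v).

Definition dynamics (s d : V) (l : V -> R) (delta : R)
  (f b : nat -> V -> R) (p : nat -> V -> V -> R) : Prop :=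
  [/\ (forall t v, v != s ->
         f t.+1 v = (1 - l v) * \sum_(z | E z v) fedge f p t z v),
      (forall t u, u != d ->
         b t.+1 u = (1 - l u) * \sum_(z | E u z) bedge b p t u z) &
      (forall t u v, E u v ->
         p t.+1 u v = delta * (p t u v + fedge f p t u v + bedge b p t u v))].

Definition full_path (s d : V) (P : seq V) : seq V := s :: rcons P d.

Definition on_path (w : seq V) (u v : V) : bool := (u, v) \in zip w (behead w).

Definition two_parallel_paths (s d : V) (P1 P2 : seq V) : Prop :=
  [/\ uniq (full_path s d P1), uniq (full_path s d P2),
      ~~ has (fun x => x \in P2) P1,
      (forall u v, E u v = on_path (full_path s d P1) u v
                           || on_path (full_path s d P2) u v) &
      (forall v, (v \in full_path s d P1) || (v \in full_path s d P2))].

Definition path_leak (l : V -> R) (P : seq V) : R :=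
  1 - \prod_(v <- P) (1 - l v).

(** Ratio r_{s s_1}(t) and r_{d_1 d}(t); s_i = head d Pi, d_i = last s Pi. *)
Definition r_src (p : nat -> V -> V -> R) (s d : V) (P1 P2 : seq V) (t : nat) : R :=
  p t s (head d P1) / p t s (head d P2).

Definition r_dst (p : nat -> V -> V -> R) (s d : V) (P1 P2 : seq V) (t : nat) : R :=
  p t (last s P1) d / p t (last s P2) d.

Definition r_min (p : nat -> V -> V -> R) (s d : V) (P1 P2 : seq V)
  (L t : nat) : R :=
  \big[Num.min/r_src p s d P1 P2 t]_(i < L)
     Num.min (r_src p s d P1 P2 (t - i)) (r_dst p s d P1 P2 (t - i)).

Definition T1_pos (p0 : V -> V -> R) (fbar bbar delta : R) : R :=
  \big[Num.max/0]_(u : V) \big[Num.max/0]_(v | E u v)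
     (ln (p0 u v / (fbar + bbar)) / ln (delta^-1)).

End Model.

(* Main.v *)
Require Import Defs.
From HB Require Import structures.
From mathcomp Require Import all_boot all_order all_algebra.
From mathcomp Require Import boolp reals exp.
From mathcomp Require Import ring lra.
Import Order.TTheory GRing.Theory Num.Theory.
Local Open Scope ring_scope.
Set Implicit Arguments. Unset Strict Implicit.

Lemma zip_mem (T : eqType) (x : T) r u v :
  (u, v) \in zip (x :: r) r -> (u \in belast x r) && (v \in r).
Proof.
elim: r x => [|y r IH] x //=.
rewrite in_cons => /orP [/eqP [-> ->]|/IH /andP [h1 h2]].
  by rewrite !in_cons !eqxx.
by rewrite !in_cons h1 h2 !orbT.
Qed.

Lemma zip_succ_uniq (T : eqType) (x : T) r u v v' :
  uniq (x :: r) -> (u, v) \in zip (x :: r) r -> (u, v') \in zip (x :: r) r -> v = v'.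
Proof.
elim: r x => [|y r IH] x //= /andP [hx hu].
rewrite !in_cons => /orP [/eqP [e1 e2]|h1] /orP [/eqP [e3 e4]|h2].
- by rewrite e2 e4.
- by move/zip_mem: h2 => /andP [/mem_belast h3 _]; rewrite e1 in h3; rewrite h3 in hx.
- by move/zip_mem: h1 => /andP [/mem_belast h3 _]; rewrite e3 in h3; rewrite h3 in hx.
- exact: (IH _ hu h1 h2).
Qed.

Lemma zip_pred_uniq (T : eqType) (x : T) r u u' v :
  uniq (x :: r) -> (u, v) \in zip (x :: r) r -> (u', v) \in zip (x :: r) r -> u = u'.
Proof.
elim: r x => [|y r IH] x //= /andP [hx hu].
move: (hu) => /= /andP [hy _].
rewrite !in_cons => /orP [/eqP [e1 e2]|h1] /orP [/eqP [e3 e4]|h2].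
- by rewrite e1 e3.
- by move/zip_mem: h2 => /andP [_ h3]; rewrite e2 in h3; rewrite h3 in hy.
- by move/zip_mem: h1 => /andP [_ h3]; rewrite e4 in h3; rewrite h3 in hy.
- exact: (IH _ hu h1 h2).
Qed.

Lemma zip_cat (T : eqType) (pre rest : seq T) x y :
  (x, y) \in zip (pre ++ x :: y :: rest) (behead (pre ++ x :: y :: rest)).
Proof.
elim: pre => [|a pre IH] /=; first by rewrite in_cons eqxx.
case: pre IH => [|a' pre] /= IH; rewrite in_cons IH orbT //.
Qed.

Lemma zip_last (T : eqType) (x y : T) r :
  (last x r, y) \in zip (x :: rcons r y) (rcons r y).
Proof.
elim: r x => [|z r IH] x /=; first exact: mem_head.
by rewrite in_cons IH orbT.
Qed.

Lemma zip_succ_ex (T : eqType) (x : T) r u :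
  u \in belast x r -> exists v, (u, v) \in zip (x :: r) r.
Proof.
elim: r x => [|y r IH] x //=; rewrite in_cons.
case/orP => [/eqP ->|/IH [v hv]]; first by exists y; exact: mem_head.
by exists v; rewrite in_cons hv orbT.
Qed.

Lemma zip_pred_ex (T : eqType) (x : T) r v :
  v \in r -> exists u, (u, v) \in zip (x :: r) r.
Proof.
elim: r x => [|y r IH] x //=; rewrite in_cons.
case/orP => [/eqP ->|/(IH y) [u hu]]; first by exists x; exact: mem_head.
by exists u; rewrite in_cons hu orbT.
Qed.


Lemma tpp_sym (V : finType) (E : rel V) s d P1 P2 :
  two_parallel_paths E s d P1 P2 -> two_parallel_paths E s d P2 P1.
Proof.
case=> u1 u2 dis eE cov; split => //.
- apply/hasPn => x xP2; apply/negP => xP1.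
  by move/hasPn: dis => /(_ x xP1); rewrite xP2.
- by move=> u v; rewrite orbC.
- by move=> v; rewrite orbC.
Qed.

Lemma uniq_fp (V : finType) (s d : V) P : uniq (full_path s d P) ->
  [/\ s != d, s \notin P, d \notin P & uniq P].
Proof.
rewrite /full_path /= mem_rcons in_cons negb_or rcons_uniq => /andP [/andP [sd sP] /andP [dP uP]].
by split.
Qed.

Lemma on_path_fp (V : finType) (s d : V) P u v :
  on_path (full_path s d P) u v = ((u, v) \in zip (s :: rcons P d) (rcons P d)).
Proof. by []. Qed.

Lemma E_src_tgt (V : finType) (E : rel V) s d P1 P2 u v :
  two_parallel_paths E s d P1 P2 -> E u v ->
  ((u \in s :: P1) && (v \in rcons P1 d)) || ((u \in s :: P2) && (v \in rcons P2 d)).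
Proof.
case=> _ _ _ eE _; rewrite eE !on_path_fp.
by case/orP => /zip_mem; rewrite belast_rcons => ->; rewrite ?orbT.
Qed.

Lemma E_not_d (V : finType) (E : rel V) s d P1 P2 u v :
  two_parallel_paths E s d P1 P2 -> E u v -> u != d.
Proof.
move=> H /(E_src_tgt H); case: H => /uniq_fp [sd _ dP1 _] /uniq_fp [_ _ dP2 _] _ _ _.
case/orP => /andP [hu _]; apply/negP => /eqP eu; move: hu; rewrite eu in_cons.
- by rewrite eq_sym (negbTE sd) (negbTE dP1).
- by rewrite eq_sym (negbTE sd) (negbTE dP2).
Qed.

Lemma E_not_s (V : finType) (E : rel V) s d P1 P2 u v :
  two_parallel_paths E s d P1 P2 -> E u v -> v != s.
Proof.
move=> H /(E_src_tgt H); case: H => /uniq_fp [sd sP1 _ _] /uniq_fp [_ sP2 _ _] _ _ _.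
case/orP => /andP [_ hv]; apply/negP => /eqP ev; move: hv; rewrite ev mem_rcons in_cons.
- by rewrite (negbTE sd) (negbTE sP1).
- by rewrite (negbTE sd) (negbTE sP2).
Qed.

Lemma P1_out (V : finType) (E : rel V) s d P1 P2 u :
  two_parallel_paths E s d P1 P2 -> u \in P1 -> exists z0, forall z, E u z = (z == z0).
Proof.
move=> H uP1; case: (H) => u1 _ dis eE _; case/uniq_fp: (u1) => sd sP1 dP1 _.
have uP2 : u \notin s :: P2.
  rewrite in_cons negb_or; apply/andP; split.
    by apply/negP => /eqP e; rewrite e in uP1; rewrite uP1 in sP1.
  by apply/negP => uP2; move/hasPn: dis => /(_ u uP1); rewrite uP2.
have : u \in belast s (rcons P1 d) by rewrite belast_rcons in_cons uP1 orbT.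
case/zip_succ_ex => z0 hz0; exists z0 => z.
rewrite eE !on_path_fp.
have -> : ((u, z) \in zip (s :: rcons P2 d) (rcons P2 d)) = false.
  apply/negP => /zip_mem; rewrite belast_rcons => /andP [h _]; by rewrite h in uP2.
rewrite orbF; apply/idP/eqP => [h|->//].
exact: (zip_succ_uniq u1 h hz0).
Qed.

Lemma P1_in (V : finType) (E : rel V) s d P1 P2 u :
  two_parallel_paths E s d P1 P2 -> u \in P1 -> exists z1, forall z, E z u = (z == z1).
Proof.
move=> H uP1; case: (H) => u1 _ dis eE _; case/uniq_fp: (u1) => sd sP1 dP1 _.
have uP2 : u \notin rcons P2 d.
  rewrite mem_rcons in_cons negb_or; apply/andP; split.
    by apply/negP => /eqP e; rewrite e in uP1; rewrite uP1 in dP1.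
  by apply/negP => uP2; move/hasPn: dis => /(_ u uP1); rewrite uP2.
have : u \in rcons P1 d by rewrite mem_rcons in_cons uP1 orbT.
case/(zip_pred_ex s) => z1 hz1; exists z1 => z.
rewrite eE !on_path_fp.
have -> : ((z, u) \in zip (s :: rcons P2 d) (rcons P2 d)) = false.
  apply/negP => /zip_mem /andP [_ h]; by rewrite h in uP2.
rewrite orbF; apply/idP/eqP => [h|->//].
exact: (zip_pred_uniq u1 h hz1).
Qed.

Lemma int_out_in (V : finType) (E : rel V) s d P1 P2 u :
  two_parallel_paths E s d P1 P2 -> u != s -> u != d ->
  (exists z0, forall z, E u z = (z == z0)) /\ (exists z1, forall z, E z u = (z == z1)).
Proof.
move=> H us ud; case: (H) => _ _ _ _ /(_ u).
rewrite /full_path !in_cons !mem_rcons !in_cons (negbTE us) (negbTE ud) /=.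
case/orP => uP.
- by split; [apply: (P1_out H uP) | apply: (P1_in H uP)].
- by split; [apply: (P1_out (tpp_sym H) uP) | apply: (P1_in (tpp_sym H) uP)].
Qed.

Lemma src_out (V : finType) (E : rel V) s d P1 P2 z :
  two_parallel_paths E s d P1 P2 -> E s z = (z == head d P1) || (z == head d P2).
Proof.
case=> u1 u2 _ eE _; rewrite eE !on_path_fp.
have key : forall P, uniq (s :: rcons P d) ->
    ((s, z) \in zip (s :: rcons P d) (rcons P d)) = (z == head d P).
  move=> P uP; have hh : (s, head d P) \in zip (s :: rcons P d) (rcons P d).
    by case: P {uP} => [|a P] /=; exact: mem_head.
  apply/idP/eqP => [h|->//]; exact: (zip_succ_uniq uP h hh).
by rewrite (key _ u1) (key _ u2).
Qed.

Lemma dst_in (V : finType) (E : rel V) s d P1 P2 z :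
  two_parallel_paths E s d P1 P2 -> E z d = (z == last s P1) || (z == last s P2).
Proof.
case=> u1 u2 _ eE _; rewrite eE !on_path_fp.
have key : forall P, uniq (s :: rcons P d) ->
    ((z, d) \in zip (s :: rcons P d) (rcons P d)) = (z == last s P).
  move=> P uP; have hh := zip_last s d P.
  apply/idP/eqP => [h|->//]; exact: (zip_pred_uniq uP h hh).
by rewrite (key _ u1) (key _ u2).
Qed.

Lemma ends_neq (V : finType) (E : rel V) s d P1 P2 :
  two_parallel_paths E s d P1 P2 -> (P1 != [::]) || (P2 != [::]) ->
  (head d P1 != head d P2) /\ (last s P1 != last s P2).
Proof.
case=> /uniq_fp [sd sP1 dP1 _] /uniq_fp [_ sP2 dP2 _] dis _ _.
have disj : forall x, x \in P1 -> x \in P2 -> False.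
  by move=> x h1 h2; move/hasPn: dis => /(_ x h1); rewrite h2.
clear dis.
case: P1 sP1 dP1 disj => [|a P1] sP1 dP1 disj; case: P2 sP2 dP2 disj => [|c P2] sP2 dP2 disj //= _.
- split; apply/eqP => e.
  + by rewrite e mem_head in dP2.
  + by move: (mem_last c P2); rewrite -e => h; rewrite h in sP2.
- split; apply/eqP => e.
  + by rewrite -e mem_head in dP1.
  + by move: (mem_last a P1); rewrite e => h; rewrite h in sP1.
- split; apply/eqP => e.
  + by apply: (disj a); rewrite ?mem_head // e mem_head.
  + by apply: (disj (last a P1)); rewrite ?mem_last // e mem_last.
Qed.


Lemma sum_pred2 (R : realType) (V : finType) (P : pred V) (F : V -> R) x y :
  x != y -> (forall z, P z = (z == x) || (z == y)) -> \sum_(z | P z) F z = F x + F y.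
Proof.
move=> xy hP; rewrite (bigD1 x) ?hP ?eqxx //; congr (_ + _).
apply: big_pred1 => z /=; rewrite hP; case: (eqVneq z x) => [->|zx] /=.
  by rewrite (negbTE xy).
by rewrite andbT.
Qed.

Lemma sum_pred1 (R : realType) (V : finType) (P : pred V) (F : V -> R) x :
  (forall z, P z = (z == x)) -> \sum_(z | P z) F z = F x.
Proof. by move=> hP; apply: big_pred1 => z /=; rewrite hP. Qed.

Lemma card_pred2 (V : finType) (P : pred V) x y :
  x != y -> (forall z, P z = (z == x) || (z == y)) -> #|[pred z | P z]| = 2%N.
Proof.
move=> xy hP; have e : [pred z | P z] =i pred2 x y by move=> z; rewrite !inE hP.
by rewrite (eq_card e) card2 xy.
Qed.

Lemma card_pred1 (V : finType) (P : pred V) x :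
  (forall z, P z = (z == x)) -> #|[pred z | P z]| = 1%N.
Proof.
move=> hP; have e : [pred z | P z] =i pred1 x by move=> z; rewrite !inE hP.
by rewrite (eq_card e) card1.
Qed.

Lemma fedge_ge0 (R : realType) (V : finType) (E : rel V) (f : nat -> V -> R) p t u v :
  0 <= f t u -> (forall z, E u z -> 0 <= p t u z) -> E u v -> 0 <= fedge E f p t u v.
Proof.
move=> hf hp huv; rewrite /fedge; case: ifP => _ //.
apply: divr_ge0; first by apply: mulr_ge0 => //; apply: hp.
by apply: sumr_ge0 => z; apply: hp.
Qed.

Lemma bedge_bnd (R : realType) (V : finType) (E : rel V) (b : nat -> V -> R) p t u v :
  0 <= b t v -> (forall z, E z v -> 0 < p t z v) -> E u v ->
  0 <= bedge E b p t u v <= b t v.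
Proof.
move=> hb hp huv; rewrite /bedge; case: ifP => _; first by rewrite hb lexx.
set S := \sum_(z | E z v) p t z v.
have hS : p t u v <= S.
  rewrite /S (bigD1 u) //= lerDl; apply: sumr_ge0 => z /andP [hz _].
  exact: ltW (hp _ hz).
have hpu := hp _ huv.
have S0 : 0 < S by apply: lt_le_trans hS.
apply/andP; split.
  by apply: divr_ge0; [apply: mulr_ge0 => //; apply: ltW | apply: ltW].
rewrite ler_pdivrMr //; apply: ler_wpM2l => //.
Qed.

Lemma invariant (R : realType) (V : finType) (E : rel V) (s d : V)
  (P1 P2 : seq V) (l : V -> R) (delta fbar bbar : R)
  (f b : nat -> V -> R) (p : nat -> V -> V -> R) :
  two_parallel_paths E s d P1 P2 ->
  (forall v, 0 <= l v <= 1) ->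
  0 < delta -> 0 < fbar -> 0 < bbar ->
  dynamics E s d l delta f b p ->
  (forall t, f t s = fbar) ->
  (forall t, b t d = bbar) ->
  (forall u v, E u v -> 0 < p 0%N u v) ->
  (forall v, v != s -> v != d -> 0 <= f 0%N v <= fbar /\ 0 <= b 0%N v <= bbar) ->
  forall t, (forall u v, E u v -> 0 < p t u v) /\
    (forall v, v != s -> v != d -> 0 <= f t v /\ 0 <= b t v <= bbar).
Proof.
move=> H hl d0 f0 b0 [dF dB dP] hfs hbd hp0 h0.
elim=> [|t [IHp IHv]].
  split => // v vs vd; have [/andP [h1 _] h2] := h0 v vs vd; by split.
have fge0 : forall u, u != d -> 0 <= f t u.
  move=> u ud; case: (eqVneq u s) => [->|us]; first by rewrite hfs ltW.
  by case: (IHv u us ud).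
have bbnd : forall v, v != s -> 0 <= b t v <= bbar.
  move=> v vs; case: (eqVneq v d) => [->|vd]; first by rewrite hbd ltW // lexx.
  by case: (IHv v vs vd).
have pge0 : forall u z, E u z -> 0 <= p t u z by move=> u z h; exact: ltW (IHp _ _ h).
split.
  move=> u v huv; rewrite dP //.
  have h1 := IHp _ _ huv.
  have h2 : 0 <= fedge E f p t u v.
    apply: fedge_ge0 => //; first exact: fge0 (E_not_d H huv).
    by move=> z; apply: pge0.
  have /andP [h3 _] : 0 <= bedge E b p t u v <= b t v.
    apply: bedge_bnd => //; first by case/andP: (bbnd v (E_not_s H huv)).
    by move=> z hz; apply: IHp.
  by apply: mulr_gt0 => //; lra.
move=> v vs vd; split.
  rewrite dF //; apply: mulr_ge0; first by case/andP: (hl v) => _ h; lra.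
  apply: sumr_ge0 => z hz; apply: fedge_ge0 => //; first exact: fge0 (E_not_d H hz).
  by move=> y; apply: pge0.
case: (int_out_in H vs vd) => [[z0 hz0] _].
have hE : E v z0 by rewrite hz0.
rewrite dB // (sum_pred1 _ hz0).
have /andP [hb1 hb2] := bbnd z0 (E_not_s H hE).
have /andP [h3 h4] : 0 <= bedge E b p t v z0 <= b t z0 by apply: bedge_bnd => // z hz; apply: IHp.
case/andP: (hl v) => l0 l1.
apply/andP; split; first by apply: mulr_ge0; lra.
nra.
Qed.


Lemma bigmin_le (R : realType) (I : eqType) (r : seq I) (P : pred I) (F : I -> R) x0 j :
  j \in r -> P j -> \big[Num.min/x0]_(i <- r | P i) F i <= F j.
Proof.
elim: r => [|a r IH] //; rewrite in_cons big_cons => /orP [/eqP <-|hj] hP.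
  by rewrite hP ge_min lexx.
case: (P a); last exact: IH.
by rewrite ge_min IH ?orbT.
Qed.

Lemma bigmin_gt0 (R : realType) (I : eqType) (r : seq I) (P : pred I) (F : I -> R) x0 :
  0 < x0 -> (forall i, P i -> 0 < F i) -> 0 < \big[Num.min/x0]_(i <- r | P i) F i.
Proof.
move=> h0 hF; elim: r => [|a r IH]; first by rewrite big_nil.
rewrite big_cons; case: ifP => // hP.
by rewrite lt_min hF.
Qed.

Lemma bigmax_ge (R : realType) (I : eqType) (r : seq I) (P : pred I) (F : I -> R) x0 j :
  j \in r -> P j -> F j <= \big[Num.max/x0]_(i <- r | P i) F i.
Proof.
elim: r => [|a r IH] //; rewrite in_cons big_cons => /orP [/eqP <-|hj] hP.
  by rewrite hP le_max lexx.
case: (P a); last exact: IH.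
by rewrite le_max IH ?orbT.
Qed.

Lemma bigmax_ge0 (R : realType) (I : eqType) (r : seq I) (P : pred I) (F : I -> R) x0 :
  x0 <= \big[Num.max/x0]_(i <- r | P i) F i.
Proof.
elim: r => [|a r IH]; first by rewrite big_nil.
rewrite big_cons; case: ifP => // hP.
by rewrite le_max IH orbT.
Qed.

Lemma propagate (R : realType) (V : finType) (E : rel V) (s d : V)
  (P1 P2 : seq V) (l : V -> R) (delta : R)
  (f b : nat -> V -> R) (p : nat -> V -> V -> R) :
  two_parallel_paths E s d P1 P2 ->
  dynamics E s d l delta f b p ->
  forall Q x pre t, s :: P1 = pre ++ x :: Q -> (size Q <= t)%N ->
  bedge E b p t x (head d Q) =
    (\prod_(v <- Q) (1 - l v)) * bedge E b p (t - size Q) (last x Q) d.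
Proof.
move=> H [_ dB _].
case: (H) => u1 _ _ eE _; case/uniq_fp: (u1) => sd sP1 dP1 _.
elim=> [|y Q IH] x pre t hpre ht; first by rewrite big_nil mul1r subn0.
case: t ht => [|t] // ht.
have yP1 : y \in P1.
  case: pre hpre => [|a pre] /= [e1 e2]; first by rewrite e2 mem_head.
  by rewrite e2 mem_cat !in_cons eqxx !orbT.
have ys : y != s by apply/negP => /eqP e; rewrite e in yP1; rewrite yP1 in sP1.
have yd : y != d by apply/negP => /eqP e; rewrite e in yP1; rewrite yP1 in dP1.
case: (int_out_in H ys yd) => [[z0 hz0] [z1 hz1]].
have eqw : s :: rcons P1 d = rcons pre x ++ y :: head d Q :: behead (rcons Q d).
  rewrite -rcons_cons hpre rcons_cat /= cat_rcons.
  by case: (Q).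
have hE : E y (head d Q).
  rewrite eE on_path_fp; apply/orP; left.
  have := zip_cat (rcons pre x) (behead (rcons Q d)) y (head d Q).
  by rewrite -eqw.
move: (hz0 (head d Q)); rewrite hE => /esym /eqP e0.
rewrite /bedge (card_pred1 hz1) eqxx /= -/(bedge E b p t y (head d Q)).
rewrite dB // (sum_pred1 _ hz0) -e0.
rewrite (IH y (rcons pre x) t) //; last by rewrite cat_rcons.
by rewrite big_cons subSS mulrA.
Qed.


Lemma S_bound (R : realType) (V : finType) (E : rel V) (s d : V)
  (P1 P2 : seq V) (l : V -> R) (delta fbar bbar : R)
  (f b : nat -> V -> R) (p : nat -> V -> V -> R) :
  two_parallel_paths E s d P1 P2 ->
  (forall v, 0 <= l v <= 1) ->
  0 < delta < 1 ->
  0 < fbar -> 0 < bbar ->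
  dynamics E s d l delta f b p ->
  (forall t, f t s = fbar) ->
  (forall t, b t d = bbar) ->
  (forall u v, E u v -> 0 < p 0%N u v) ->
  (forall v, v != s -> v != d -> 0 <= f 0%N v <= fbar /\ 0 <= b 0%N v <= bbar) ->
  head d P1 != head d P2 ->
  forall t, p t s (head d P1) + p t s (head d P2) <=
    delta ^+ t * (p 0%N s (head d P1) + p 0%N s (head d P2))
    + 2 * (fbar + bbar) * delta / (1 - delta).
Proof.
move=> H hl /andP [d0 d1] f0 b0 dyn hfs hbd hp0 h0 hne.
have inv := invariant H hl d0 f0 b0 dyn hfs hbd hp0 h0.
case: dyn => [dF dB dP].
set s1 := head d P1; set s2 := head d P2.
have hso : forall z, E s z = (z == s1) || (z == s2) by move=> z; exact: src_out H.
have E1 : E s s1 by rewrite hso eqxx.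
have E2 : E s s2 by rewrite hso eqxx orbT.
set M := 2 * (fbar + bbar) * delta / (1 - delta).
have hM : M * (1 - delta) = 2 * (fbar + bbar) * delta by rewrite /M; field; lra.
have M0 : 0 <= M by rewrite /M; apply: divr_ge0; nra.
elim=> [|t IH]; first by rewrite expr0 mul1r; lra.
have [IHp IHv] := inv t.
have bbnd : forall v, v != s -> 0 <= b t v <= bbar.
  move=> v vs; case: (eqVneq v d) => [->|vd]; first by rewrite hbd ltW // lexx.
  by case: (IHv v vs vd).
have Bb : forall z, E s z -> bedge E b p t s z <= bbar.
  move=> z hz; have /andP [hb1 hb2] := bbnd z (E_not_s H hz).
  have /andP [_ h] : 0 <= bedge E b p t s z <= b t z.
    by apply: bedge_bnd => // y hy; apply: IHp.
  exact: le_trans h hb2.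
have Fe : forall z, fedge E f p t s z = fbar * p t s z / (p t s s1 + p t s s2).
  by move=> z; rewrite /fedge (card_pred2 hne hso) /= hfs (sum_pred2 _ hne hso).
rewrite !dP // !Fe.
have p1 := IHp _ _ E1; have p2 := IHp _ _ E2.
have hsum : fbar * p t s s1 / (p t s s1 + p t s s2) + fbar * p t s s2 / (p t s s1 + p t s s2) = fbar.
  by field; lra.
have B1 := Bb _ E1; have B2 := Bb _ E2.
rewrite exprS.
set S0 := p 0%N s s1 + p 0%N s s2.
set A := fbar * p t s s1 / (p t s s1 + p t s s2).
set B := fbar * p t s s2 / (p t s s1 + p t s s2).
set X := delta ^+ t * S0.
rewrite -/S0 -/X in IH; rewrite -/A -/B in hsum.
have : delta * (p t s s1 + A + bedge E b p t s s1) + delta * (p t s s2 + B + bedge E b p t s s2)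
   <= delta * (X + M + fbar + 2 * bbar).
  rewrite -mulrDr; apply: ler_wpM2l; lra.
have : delta * (X + M + fbar + 2 * bbar) <= delta * X + M by nra.
rewrite mulrA; lra.
Qed.


Lemma final_ineq (R: realType) (delta fbar bbar alpha beta p1 p2 a1 a2 c1 c2 rho C : R):
 0<delta -> 0<fbar -> 0 < bbar -> 0<p1 -> 0<p2 -> 0<a1 -> 0<a2 -> 0<c1 -> 0<c2 -> 0 < rho ->
 0 <= beta -> beta < alpha ->
 rho <= p1/p2 -> rho <= a1/a2 -> rho <= c1/c2 ->
 p1 + p2 + fbar <= bbar * C ->
 rho * (1 + (alpha - beta)/(C+beta)) <=
 (delta * (p1 + fbar * p1/(p1+p2) + alpha * (bbar * a1/(a1+a2)))) /
 (delta * (p2 + fbar * p2/(p1+p2) + beta * (bbar * c2/(c1+c2)))).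
Proof.
move=> d0 f0 b0 p10 p20 a10 a20 c10 c20 r0 be0 ab hp ha hc hC.
rewrite ler_pdivlMr // in hp; rewrite ler_pdivlMr // in ha; rewrite ler_pdivlMr // in hc.
have S0 : 0 < p1 + p2 by lra.
have C0 : 0 < C.
  have : 0 < bbar * C by lra.
  by rewrite pmulr_rgt0.
set q := 1 + fbar / (p1 + p2).
have q0 : 0 < q by rewrite /q; have := divr_gt0 f0 S0; lra.
have e1 : p1 + fbar * p1 / (p1 + p2) = p1 * q by rewrite /q; field; lra.
have e2 : p2 + fbar * p2 / (p1 + p2) = p2 * q by rewrite /q; field; lra.
rewrite e1 e2.
set G1 := bbar * a1 / (a1 + a2).
set G2 := bbar * c2 / (c1 + c2).
set u := bbar / (1 + rho).
have h1 : rho * u <= G1.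
  have -> : G1 = rho * u + bbar * (a1 - rho * a2) / ((a1 + a2) * (1 + rho)).
    by rewrite /G1 /u; field; apply/andP; split; lra.
  have : 0 <= bbar * (a1 - rho * a2) / ((a1 + a2) * (1 + rho)).
    apply: divr_ge0; nra.
  lra.
have h2 : G2 <= u.
  have -> : u = G2 + bbar * (c1 - rho * c2) / ((c1 + c2) * (1 + rho)).
    by rewrite /G2 /u; field; apply/andP; split; lra.
  have : 0 <= bbar * (c1 - rho * c2) / ((c1 + c2) * (1 + rho)).
    apply: divr_ge0; nra.
  lra.
have G20 : 0 <= G2 by rewrite /G2; apply: divr_ge0; nra.
have u0 : 0 < u by rewrite /u; apply: divr_gt0; lra.
set K := p2 * q.
have K0 : 0 < K by rewrite /K; nra.
have h5 : K * (1 + rho) <= bbar * C.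
  have : K * (1 + rho) <= p1 * q + p2 * q by rewrite /K; nra.
  have -> : p1 * q + p2 * q = p1 + p2 + fbar by rewrite /q; field; lra.
  lra.
have h5' : K <= u * C.
  rewrite /u mulrAC ler_pdivlMr; last lra. done.
have D0 : 0 < p2 * q + beta * G2 by nra.
have D0' : 0 < delta * (p2 * q + beta * G2) by apply: mulr_gt0.
rewrite ler_pdivlMr //.
have N1 : rho * (K + alpha * u) <= p1 * q + alpha * G1.
  have : rho * K <= p1 * q by rewrite /K; nra.
  have : alpha * (rho * u) <= alpha * G1 by apply: ler_wpM2l; lra.
  lra.
have D1 : p2 * q + beta * G2 <= K + beta * u by rewrite /K; nra.
have E1 : 1 + (alpha - beta) / (C + beta) = (C + alpha) / (C + beta) by field; lra.
rewrite E1.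
set X := (C + alpha) / (C + beta).
have X0 : 0 <= X by rewrite /X; apply: divr_ge0; lra.
have key : X * (K + beta * u) <= K + alpha * u.
  rewrite /X mulrAC ler_pdivrMr; last lra.
  nra.
have -> : rho * X * (delta * (p2 * q + beta * G2)) = delta * (rho * X * (p2 * q + beta * G2)) by ring.
apply: ler_wpM2l; first lra.
apply: (le_trans _ N1).
rewrite -mulrA; apply: ler_wpM2l; first lra.
apply: le_trans key.
by apply: ler_wpM2l.
Qed.


Unset Implicit Arguments.

Theorem mainTheorem10 (R : realType) (V : finType) (E : rel V) (s d : V)
  (P1 P2 : seq V) (l : V -> R) (delta fbar bbar : R)
  (f b : nat -> V -> R) (p : nat -> V -> V -> R) :
  two_parallel_paths E s d P1 P2 ->
  (forall v, 0 <= l v <= 1) ->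
  0 < delta < 1 ->
  0 < fbar -> 0 < bbar ->
  dynamics E s d l delta f b p ->
  (forall t, f t s = fbar) ->
  (forall t, b t d = bbar) ->
  (forall u v, E u v -> 0 < p 0%N u v) ->
  (forall v, v != s -> v != d -> 0 <= f 0%N v <= fbar /\ 0 <= b 0%N v <= bbar) ->
  path_leak l P1 < path_leak l P2 ->
  let m := (size P1).+1 in
  let n := (size P2).+1 in
  let L := maxn m n in
  let alpha := 1 - path_leak l P1 in
  let beta := 1 - path_leak l P2 in
  let C := 5 * (fbar + bbar) / (bbar * (1 - delta)) in
  forall t : nat,
    (L%:R + T1_pos E (p 0%N) fbar bbar delta <= t%:R :> R) ->
    r_src p s d P1 P2 t.+1 >=
      r_min p s d P1 P2 L t * (1 + (alpha - beta) / (C + beta)).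
Proof.
move=> H hl d01 f0 b0 dyn hfs hbd hp0 h0 hleak m n L alpha beta C t hT.
case/andP: (d01) => dl0 dl1.
have hne0 : (P1 != [::]) || (P2 != [::]).
  by move: hleak; case: (P1) => [|? ?]; case: (P2) => [|? ?] => //; rewrite ltxx.
have [hs12 hd12] := ends_neq H hne0.
have inv := invariant H hl dl0 f0 b0 dyn hfs hbd hp0 h0.
have SB := S_bound H hl d01 f0 b0 dyn hfs hbd hp0 h0 hs12 t.
case: (dyn) => [dF dB dP].
set s1 := head d P1 in hs12 SB *; set s2 := head d P2 in hs12 SB *.
set e1 := last s P1 in hd12 *; set e2 := last s P2 in hd12 *.
have hso : forall z, E s z = (z == s1) || (z == s2) by move=> z; exact: src_out H.
have hdi : forall z, E z d = (z == e1) || (z == e2) by move=> z; exact: dst_in H.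
have Es1 : E s s1 by rewrite hso eqxx.
have Es2 : E s s2 by rewrite hso eqxx orbT.
have Ee1 : E e1 d by rewrite hdi eqxx.
have Ee2 : E e2 d by rewrite hdi eqxx orbT.
have allp : forall tau u v, E u v -> 0 < p tau u v by move=> tau u v huv; case: (inv tau) => hh _; apply: hh.
set T1 := T1_pos E (p 0%N) fbar bbar delta in hT.
have T0 : 0 <= T1 by rewrite /T1 /T1_pos; apply: bigmax_ge0.
have hL : (L <= t)%N.
  have : L%:R <= t%:R :> R by lra.
  by rewrite ler_nat.
have Tle : forall z, E s z -> ln (p 0%N s z / (fbar + bbar)) / ln (delta^-1) <= T1.
  move=> z hz; rewrite /T1 /T1_pos.
  pose G := (fun u => \big[Num.max/0]_(v | E u v) (ln (p 0%N u v / (fbar + bbar)) / ln (delta^-1))).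
  have h := @bigmax_ge R V (index_enum V) (fun _ => true) G 0 s (mem_index_enum s) isT.
  apply: (le_trans _ h); rewrite /G.
  exact: (@bigmax_ge R V (index_enum V) (E s) _ 0 z (mem_index_enum z) hz).
have Dp : forall z, E s z -> delta ^+ t * p 0%N s z <= fbar + bbar.
  move=> z hz.
  have tT : ln (p 0%N s z / (fbar + bbar)) / ln (delta^-1) <= t%:R.
    apply: le_trans (Tle z hz) _.
    have : 0 <= L%:R :> R by rewrite ler0n.
    lra.
  have di1 : 1 < delta^-1 by rewrite invf_gt1.
  have di0 : 0 < delta^-1 by lra.
  have lnd : 0 < ln (delta^-1) by apply: ln_gt0.
  rewrite ler_pdivrMr // mulr_natl -lnXn // in tT.
  have ap : 0 < fbar + bbar by lra.
  have pz := hp0 _ _ hz.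
  have hpos1 : p 0%N s z / (fbar + bbar) \is Num.pos by rewrite posrE; apply: divr_gt0.
  have hpos2 : delta^-1 ^+ t \is Num.pos by rewrite posrE; apply: exprn_gt0.
  rewrite (ler_ln hpos1 hpos2) exprVn ler_pdivrMr // in tT.
  have D0 : 0 < delta ^+ t by apply: exprn_gt0.
  have := ler_wpM2l (ltW D0) tT.
  by rewrite mulrA mulfV ?mul1r // lt0r_neq0.
have hk1 : (size P1 <= t)%N.
  apply: leq_trans hL; apply: leq_trans (leq_maxl m n); exact: leqnSn.
have hk2 : (size P2 <= t)%N.
  apply: leq_trans hL; apply: leq_trans (leq_maxr m n); exact: leqnSn.
have prop1 := @propagate R V E s d P1 P2 l delta f b p H dyn P1 s [::] t erefl hk1.
have prop2 := @propagate R V E s d P2 P1 l delta f b p (tpp_sym H) dyn P2 s [::] t erefl hk2.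
have Bd : forall tau z, bedge E b p tau z d = bbar * p tau z d / (p tau e1 d + p tau e2 d).
  by move=> tau z; rewrite /bedge (card_pred2 hd12 hdi) /= hbd (sum_pred2 _ hd12 hdi).
have Fe : forall z, fedge E f p t s z = fbar * p t s z / (p t s s1 + p t s s2).
  by move=> z; rewrite /fedge (card_pred2 hs12 hso) /= hfs (sum_pred2 _ hs12 hso).
have ea : alpha = \prod_(v <- P1) (1 - l v) by rewrite /alpha /path_leak; ring.
have eb : beta = \prod_(v <- P2) (1 - l v) by rewrite /beta /path_leak; ring.
rewrite -/s1 -/e1 in prop1; rewrite -/s2 -/e2 in prop2.
rewrite /r_src !dP // !Fe -/s1 -/s2 prop1 prop2 !Bd -ea -eb.
set rho := r_min p s d P1 P2 L t.
have Lpos : (0 < L)%N by apply: leq_trans (leq_maxl m n).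
have rle : forall j, (j < L)%N -> rho <= r_dst p s d P1 P2 (t - j).
  move=> j hj; rewrite /rho /r_min.
  apply: le_trans (@bigmin_le R _ (index_enum 'I_L) (fun _ => true) (fun i : 'I_L => Num.min (r_src p s d P1 P2 (t - i)) (r_dst p s d P1 P2 (t - i))) (r_src p s d P1 P2 t) (Ordinal hj) (mem_index_enum _) isT) _.
  by rewrite ge_min lexx orbT.
have rle0 : rho <= r_src p s d P1 P2 t.
  rewrite /rho /r_min.
  apply: le_trans (@bigmin_le R _ (index_enum 'I_L) (fun _ => true) (fun i : 'I_L => Num.min (r_src p s d P1 P2 (t - i)) (r_dst p s d P1 P2 (t - i))) (r_src p s d P1 P2 t) (Ordinal Lpos) (mem_index_enum _) isT) _.
  by rewrite ge_min subn0 lexx.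
have rpos : 0 < rho.
  rewrite /rho /r_min; apply: bigmin_gt0.
    by rewrite /r_src; apply: divr_gt0; apply: allp.
  move=> i _; rewrite lt_min; apply/andP; split.
    by rewrite /r_src; apply: divr_gt0; apply: allp.
  by rewrite /r_dst; apply: divr_gt0; apply: allp.
have hr1 := rle (size P1) (leq_trans (leqnn _) (leq_maxl m n)).
have hr2 := rle (size P2) (leq_trans (leqnn _) (leq_maxr m n)).
have beta0 : 0 <= beta.
  by rewrite eb; apply: prodr_ge0 => v _; case/andP: (hl v) => _ h; lra.
have ab : beta < alpha by rewrite /alpha /beta; lra.
have hC : p t s s1 + p t s s2 + fbar <= bbar * C.
  have -> : bbar * C = 5 * (fbar + bbar) / (1 - delta) by rewrite /C; field; apply/andP; split; lra.
  have D1 := Dp _ Es1; have D2 := Dp _ Es2.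
  set Q := 2 * (fbar + bbar) * delta / (1 - delta) in SB.
  have hQ : Q * (1 - delta) = 2 * (fbar + bbar) * delta by rewrite /Q; field; lra.
  set W := 5 * (fbar + bbar) / (1 - delta).
  have hW : W * (1 - delta) = 5 * (fbar + bbar) by rewrite /W; field; lra.
  have e0 : 0 < 1 - delta by lra.
  have h1 : p t s s1 + p t s s2 + fbar <= 2 * (fbar + bbar) + Q + fbar.
    move: SB; rewrite mulrDr; lra.
  apply: le_trans h1 _.
  rewrite -(ler_pM2r e0) hW.
  have -> : (2 * (fbar + bbar) + Q + fbar) * (1 - delta) = (2 * (fbar + bbar) + fbar) * (1 - delta) + 2 * (fbar + bbar) * delta by rewrite -hQ; ring.
  nra.
apply: final_ineq => //; try by apply: allp.
Qed.
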